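(* In every run of the algorithm described in the context, at every time and for every $i\in\{1,\dots,n\}$, the sequence $history_i[0..w\_sync_i[i]]$ is a prefix of the sequence $history_w[0..w\_sync_w[w]]$.
   Context: Model. There are $n$ asynchronous processes $p_1,\dots,p_n$, of which up to $t<n/2$ may crash; a process runs its algorithm correctly until it crashes. Each ordered pair of processes is linked by a reliable (no loss, corruption, duplication or creation), asynchronous, not necessarily FIFO channel. $p_w$ is the single writer, invoking writes sequentially; $v_0$ is the initial value. Messages: $\textsc{write}(b,v)$ with $b\in\{0,1\}$, which stands for the two types $\textsc{write0}(v)$ and $\textsc{write1}(v)$; $\textsc{read}()$; $\textsc{proceed}()$. Variables of $p_i$. These are: $history_i$ with $history_i[0]=v_0$; $w\_sync_i[1..n]$, initially all $0$; $r\_sync_i[1..n]$, initially all $0$. $\mathsf{write}(v)$ by $p_w$: $wsn\gets w\_sync_w[w]+1$; $w\_sync_w[w]\gets wsn$; $history_w[wsn]\gets v$. Send $\textsc{write}(wsn\bmod 2,v)$ to each $p_j$ with $w\_sync_w[j]=wsn-1$. Wait until at least $n-t$ indices $j$ have $w\_sync_w[j]=wsn$. Return. $\mathsf{read}()$ by $p_i$: $r\_sync_i[i]\gets r\_sync_i[i]+1$ and call the new value $rsn$. Send $\textsc{read}()$ to all $p_j$ with $j\ne i$. Wait until at least $n-t$ indices $j$ have $r\_sync_i[j]=rsn$. Let $sn\gets w\_sync_i[i]$. Wait until at least $n-t$ indices $j$ have $w\_sync_i[j]\ge sn$. Return $history_i[sn]$. On receipt of $\textsc{write}(b,v)$ from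 $p_j$ at $p_i$: Wait until $b=(w\_sync_i[j]+1)\bmod 2$. Let $wsn\gets w\_sync_i[j]+1$. If $wsn=w\_sync_i[i]+1$, then set $w\_sync_i[i]\gets wsn$ and $history_i[wsn]\gets v$, and send $\textsc{write}(wsn\bmod 2,v)$ to each $p_\ell$ with $w\_sync_i[\ell]=wsn-1$. Else, if $wsn<w\_sync_i[i]$, send $\textsc{write}((wsn+1)\bmod 2,history_i[wsn+1])$ to $p_j$. Finally set $w\_sync_i[j]\gets wsn$. On receipt of $\textsc{read}()$ from $p_j$ at $p_i$: Let $sn\gets w\_sync_i[i]$; wait until $w\_sync_i[j]\ge sn$; send $\textsc{proceed}()$ to $p_j$. On receipt of $\textsc{proceed}()$ from $p_j$ at $p_i$: $r\_sync_i[j]\gets r\_sync_i[j]+1$. Message handlers run concurrently; a waiting handler does not block the reception of other messages. *)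

(* Defs.v *)
(* Operational (interleaving) model of the one-writer
   register algorithm of the context: crash-prone processes, reliable
   asynchronous non-FIFO channels (multiset of in-transit messages),
   concurrently waiting message handlers (executed atomically once their
   wait condition holds). *)
From mathcomp Require Import all_boot.
Set Implicit Arguments. Unset Strict Implicit. Unset Printing Implicit Defensive.

Section Model.
Variables (n : nat) (V : Type).

(* WRITE(b,v): b = false stands for WRITE0, b = true for WRITE1;
   "x mod 2" is encoded as [odd x]. *)
Inductive msg := MWrite of bool & V | MRead | MProceed.

(* a received message whose handler is waiting *)
Inductive pending :=
| PWrite of 'I_n & bool & V      (* WRITE(b,v) received from p_j *)
| PRead of 'I_n & nat.           (* READ() received from p_j, with sn fixed at receipt *)

Inductive status :=
| Idle
| Writing of nat        (* waiting in write, for wsn *)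
| Reading1 of nat       (* waiting in read, first wait, for rsn *)
| Reading2 of nat.      (* waiting in read, second wait, for sn *)

Record lstate := LState {
  hist : nat -> V;              (* history_i (entries never written are arbitrary) *)
  wsync : 'I_n -> nat;
  rsync : 'I_n -> nat;
  pend : seq pending;
  stat : status;
  crashed : bool }.

(* (sender, receiver, message) *)
Definition packet := ('I_n * 'I_n * msg)%type.

Record config := Config { loc : 'I_n -> lstate; net : seq packet }.

Definition upd (T : Type) (f : 'I_n -> T) (j : 'I_n) (x : T) : 'I_n -> T :=
  fun k => if k == j then x else f k.
Definition updh (h : nat -> V) (k : nat) (x : V) : nat -> V :=
  fun m => if m == k then x else h m.

Definition set_stat (s : lstate) (st : status) : lstate :=
  LState (hist s) (wsync s) (rsync s) (pend s) st (crashed s).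
Definition set_pend (s : lstate) (p : seq pending) : lstate :=
  LState (hist s) (wsync s) (rsync s) p (stat s) (crashed s).

(* invocation of write(v) by p_i (= p_w) *)
Definition inv_write (i : 'I_n) (s : lstate) (v : V) : lstate * seq packet :=
  let wsn := (wsync s i).+1 in
  let ws := upd (wsync s) i wsn in
  (LState (updh (hist s) wsn v) ws (rsync s) (pend s) (Writing wsn) (crashed s),
   [seq (i, l, MWrite (odd wsn) v) | l <- enum 'I_n & ws l == wsn - 1]).

(* invocation of read() by p_i *)
Definition inv_read (i : 'I_n) (s : lstate) : lstate * seq packet :=
  let rsn := (rsync s i).+1 in
  (LState (hist s) (wsync s) (upd (rsync s) i rsn) (pend s) (Reading1 rsn) (crashed s),
   [seq (i, l, MRead) | l <- enum 'I_n & l != i]).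

Definition guard (s : lstate) (h : pending) : bool :=
  match h with
  | PWrite j b _ => b == odd (wsync s j).+1
  | PRead j sn => sn <= wsync s j
  end.

(* body (after the wait) of a handler at p_i; [s] already has the handler
   removed from its pending list *)
Definition run (i : 'I_n) (s : lstate) (h : pending) : lstate * seq packet :=
  match h with
  | PWrite j _ v =>
      let wsn := (wsync s j).+1 in
      if wsn == (wsync s i).+1 then
        let ws := upd (wsync s) i wsn in
        (LState (updh (hist s) wsn v) (upd ws j wsn) (rsync s) (pend s) (stat s) (crashed s),
         [seq (i, l, MWrite (odd wsn) v) | l <- enum 'I_n & ws l == wsn - 1])
      else if wsn < wsync s i then
        (LState (hist s) (upd (wsync s) j wsn) (rsync s) (pend s) (stat s) (crashed s),
         [:: (i, j, MWrite (odd wsn.+1) (hist s wsn.+1))])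
      else
        (LState (hist s) (upd (wsync s) j wsn) (rsync s) (pend s) (stat s) (crashed s),
         [::])
  | PRead j _ => (s, [:: (i, j, MProceed)])
  end.

Definition receive (i : 'I_n) (s : lstate) (j : 'I_n) (m : msg) : lstate :=
  match m with
  | MWrite b v => set_pend s (rcons (pend s) (PWrite j b v))
  | MRead => set_pend s (rcons (pend s) (PRead j (wsync s i)))
  | MProceed =>
      LState (hist s) (wsync s) (upd (rsync s) j (rsync s j).+1) (pend s) (stat s) (crashed s)
  end.

Definition crash (s : lstate) : lstate :=
  LState (hist s) (wsync s) (rsync s) (pend s) (stat s) true.

(* local (non-delivery) atomic steps of process p_i *)
Inductive lstep (w : 'I_n) (t : nat) (i : 'I_n) : lstate -> lstate -> seq packet -> Prop :=
| ls_write_inv s v : i = w -> stat s = Idle ->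
    lstep w t i s (inv_write i s v).1 (inv_write i s v).2
| ls_write_ret s wsn : stat s = Writing wsn ->
    n - t <= #|[pred j | wsync s j == wsn]| ->
    lstep w t i s (set_stat s Idle) [::]
| ls_read_inv s : stat s = Idle ->
    lstep w t i s (inv_read i s).1 (inv_read i s).2
| ls_read_mid s rsn : stat s = Reading1 rsn ->
    n - t <= #|[pred j | rsync s j == rsn]| ->
    lstep w t i s (set_stat s (Reading2 (wsync s i))) [::]
| ls_read_ret s sn : stat s = Reading2 sn ->
    n - t <= #|[pred j | sn <= wsync s j]| ->
    lstep w t i s (set_stat s Idle) [::]
| ls_handler s p1 h p2 : pend s = p1 ++ h :: p2 -> guard s h ->
    lstep w t i s (run i (set_pend s (p1 ++ p2)) h).1 (run i (set_pend s (p1 ++ p2)) h).2.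

Inductive step (w : 'I_n) (t : nat) : config -> config -> Prop :=
| st_local c i s' out : ~~ crashed (loc c i) -> lstep w t i (loc c i) s' out ->
    step w t c (Config (upd (loc c) i s') (net c ++ out))
| st_deliver c s1 s2 j i m : net c = s1 ++ (j, i, m) :: s2 -> ~~ crashed (loc c i) ->
    step w t c (Config (upd (loc c) i (receive i (loc c i) j m)) (s1 ++ s2))
| st_crash c i : ~~ crashed (loc c i) -> #|[pred k | crashed (loc c k)]| < t ->
    step w t c (Config (upd (loc c) i (crash (loc c i))) (net c)).

(* initial configurations: history_i[0] = v0, all counters 0, no message in
   transit; unwritten history entries are arbitrary *)
Definition initial (v0 : V) (c : config) : Prop :=
  net c = [::] /\
  forall i, hist (loc c i) 0 = v0 /\ (forall j, wsync (loc c i) j = 0) /\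
             (forall j, rsync (loc c i) j = 0) /\ pend (loc c i) = [::] /\
             stat (loc c i) = Idle /\ crashed (loc c i) = false.

Inductive reachable (v0 : V) (w : 'I_n) (t : nat) : config -> Prop :=
| reach_init c : initial v0 c -> reachable v0 w t c
| reach_step c c' : reachable v0 w t c -> step w t c c' -> reachable v0 w t c'.

Definition hist_seq (i : 'I_n) (s : lstate) : seq V := mkseq (hist s) (wsync s i).+1.

End Model.

Definition is_prefix (T : Type) (s1 s2 : seq T) : Prop := exists s3, s2 = s1 ++ s3.

(* Main.v *)
Require Import Defs.
From mathcomp Require Import all_boot zify.
From Stdlib Require Import FunctionalExtensionality.
From Stdlib Require Lists.List.
Set Implicit Arguments. Unset Strict Implicit. Unset Printing Implicit Defensive.

Lemma In_cat (T : Type) (x : T) (s1 s2 : seq T) :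
  List.In x (s1 ++ s2) <-> List.In x s1 \/ List.In x s2.
Proof. elim: s1 => [|y s IH] /=; [tauto|]. rewrite IH; tauto. Qed.

Lemma In_count (T : Type) (a : pred T) x (s : seq T) :
  List.In x s -> a x -> 0 < count a s.
Proof.
elim: s => [|y s IH] //= [->|H] ax; first by rewrite ax.
by have := IH H ax; lia.
Qed.

Lemma In_map_filter (T U : Type) (f : T -> U) (P : pred T) y (s : seq T) :
  List.In y [seq f x | x <- s & P x] -> exists x, y = f x /\ P x.
Proof.
elim: s => [|x s IH] //=; case Px: (P x) => /=; last exact: IH.
case=> [<-|]; [by exists x | exact: IH].
Qed.

Lemma count_enum_eq (n : nat) (y : 'I_n) (c : bool) :
  count (fun l => (l == y) && c) (enum 'I_n) = c.
Proof.
case: c.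
  rewrite (eq_count (a2 := pred1 y)); last by move=> l; rewrite andbT.
  by rewrite count_uniq_mem ?enum_uniq ?mem_enum.
by rewrite (eq_count (a2 := pred0)) ?count_pred0 // => l; rewrite andbF.
Qed.

Section Proof.
Variables (n : nat) (V : Type) (w : 'I_n).
Local Notation pkt := (packet n V).
Local Notation pnd := (pending n V).

Definition Sf (ws : 'I_n -> 'I_n -> nat) (j i : 'I_n) := minn (ws j j) (ws j i).+1.
Definition cntp (b : bool) (R S : nat) := count (fun k => odd k == b) (iota R.+1 (S - R)).
Definition isw (j i : 'I_n) (b : bool) (p : pkt) : bool :=
  match p with (j', i', MWrite b' _) => [&& j' == j, i' == i & b' == b] | _ => false end.
Definition ispw (j : 'I_n) (b : bool) (h : pnd) : bool :=
  match h with PWrite j' b' _ => (j' == j) && (b' == b) | _ => false end.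
Definition good ws (H : 'I_n -> nat -> V) j i b v :=
  exists k, ws i j < k <= Sf ws j i /\ odd k = b /\ v = H w k.
Definition GP ws H (p : pkt) : Prop :=
  match p with (j, i, MWrite b v) => good ws H j i b v | _ => True end.
Definition GH ws H (i : 'I_n) (h : pnd) : Prop :=
  match h with PWrite j b v => good ws H j i b v | _ => True end.

Record Inv ws H (nt : seq pkt) (pd : 'I_n -> seq pnd) : Prop := {
 I1 : forall i, ws i i <= ws w w;
 I2 : forall i k, k <= ws i i -> H i k = H w k;
 I3 : forall i j, ws i j <= ws i i;
 I4 : forall i j, ws i j <= Sf ws j i;
 I5 : forall p, List.In p nt -> GP ws H p;
 I6 : forall i h, List.In h (pd i) -> GH ws H i h;
 I7 : forall j i b, count (isw j i b) nt + count (ispw j b) (pd i) = cntp b (ws i j) (Sf ws j i) }.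

Lemma cntp_S b R S : R <= S -> cntp b R S.+1 = cntp b R S + (odd S.+1 == b).
Proof.
move=> h; rewrite /cntp subSn // -[(S - R).+1]addn1 iotaD count_cat /= addn0.
by have -> : R + (S - R) = S by lia.
Qed.

Lemma cntp_R b R S : R < S -> cntp b R S = (odd R.+1 == b) + cntp b R.+1 S.
Proof.
move=> h; rewrite /cntp.
have -> : S - R = (S - R.+1).+1 by lia.
by [].
Qed.

Lemma cntp0 b R : cntp b R R = 0.
Proof. by rewrite /cntp subnn. Qed.

Lemma cntp1 R S : R < S <= R.+2 -> cntp (odd R.+1) R S = 1.
Proof.
move=> h; rewrite cntp_R; last lia.
rewrite eqxx.
have [->|->] : S = R.+1 \/ S = R.+2 by lia.
  by rewrite cntp0.
by rewrite /cntp /= subSn // subnn /=; case: (odd R).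
Qed.

Lemma Sf_mono ws ws' x y : (forall a c, ws a c <= ws' a c) -> Sf ws x y <= Sf ws' x y.
Proof. move=> h; rewrite /Sf; have := h x x; have := h x y; lia. Qed.

Lemma Sf_ub ws H nt pd j i : Inv ws H nt pd -> Sf ws j i <= (ws i j).+2.
Proof. move=> I; have := I4 I j i; rewrite /Sf; lia. Qed.

Lemma Sf_le ws H nt pd j i : Inv ws H nt pd -> Sf ws j i <= ws w w.
Proof. move=> I; have := I1 I j; rewrite /Sf; lia. Qed.

Lemma good_k1 ws H nt pd j i v : Inv ws H nt pd ->
  good ws H j i (odd (ws i j).+1) v -> (ws i j).+1 <= Sf ws j i /\ v = H w (ws i j).+1.
Proof.
move=> I [k [hk [pk ->]]]; have := Sf_ub j i I.
have [E|E] : k = (ws i j).+1 \/ k = (ws i j).+2.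
  have := Sf_ub j i I; lia.
  by subst k; split=> //; lia.
by subst k; move: pk => /=; case: (odd _).
Qed.

Lemma good_mono ws ws' H H' x y bb vv : good ws H x y bb vv ->
  (forall a c, ws a c <= ws' a c) ->
  (forall k, ws y x < k <= Sf ws x y -> odd k = bb -> ws' y x < k) ->
  (forall k, k <= Sf ws x y -> H' w k = H w k) -> good ws' H' x y bb vv.
Proof.
move=> [k [hk [pk ->]]] hm hr hH; exists k; split; last by split=> //; rewrite hH //; lia.
have := Sf_mono x y hm; have := hr k hk pk; lia.
Qed.


Lemma count_out x y bb (i : 'I_n) bo v (P : pred 'I_n) :
  count (isw x y bb) [seq (i, l, MWrite bo v) | l <- enum 'I_n & P l] = [&& i == x, P y & bo == bb].
Proof.
rewrite count_map count_filter -(count_enum_eq y).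
apply: eq_count => l /=; rewrite /isw.
case: (eqVneq l y) => [->|ne] /=; first by case: (i == x); case: (P y); case: (bo == bb).
by rewrite andbF.
Qed.

Lemma count_isw_map (T : Type) (f : T -> pkt) x y bb (s : seq T) :
  (forall t, isw x y bb (f t) = false) -> count (isw x y bb) (map f s) = 0.
Proof. by move=> h; elim: s => //= t s ->; rewrite h. Qed.

Lemma Inv_frame ws H nt pd nt' pd' :
 Inv ws H nt pd ->
 (forall p, List.In p nt' -> GP ws H p) ->
 (forall i h, List.In h (pd' i) -> GH ws H i h) ->
 (forall j i b, count (isw j i b) nt' + count (ispw j b) (pd' i) =
                count (isw j i b) nt + count (ispw j b) (pd i)) ->
 Inv ws H nt' pd'.
Proof.
move=> I h5 h6 h7; split; [exact: I1 I|exact: I2 I|exact: I3 I|exact: I4 I|exact: h5|exact: h6|].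
by move=> j i b; rewrite h7; apply I.
Qed.

Definition wsW (ws : 'I_n -> 'I_n -> nat) :=
  fun a => if a == w then upd (ws w) w (ws w w).+1 else ws a.
Definition HW (ws : 'I_n -> 'I_n -> nat) (H : 'I_n -> nat -> V) v :=
  fun a => if a == w then updh (H w) (ws w w).+1 v else H a.

Lemma write_inv ws H nt pd v :
  Inv ws H nt pd ->
  Inv (wsW ws) (HW ws H v)
    (nt ++ [seq (w, l, MWrite (odd (ws w w).+1) v) | l <- enum 'I_n &
             upd (ws w) w (ws w w).+1 l == (ws w w).+1 - 1]) pd.
Proof.
move=> I; set W := ws w w.
have ww : wsW ws w w = W.+1 by rewrite /wsW /upd !eqxx.
have wne : forall a c, a != w -> wsW ws a c = ws a c by move=> a c h; rewrite /wsW (negbTE h).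
have wne2 : forall c, c != w -> wsW ws w c = ws w c by move=> c h; rewrite /wsW /upd !eqxx (negbTE h).
have hws : forall a c, ws a c <= wsW ws a c.
  move=> a c; case: (eqVneq a w) => [->|ha]; last by rewrite wne.
  case: (eqVneq c w) => [->|hc]; last by rewrite wne2.
  by rewrite ww.
have Hw : forall k, k <= W -> HW ws H v w k = H w k.
  by move=> k hk; rewrite /HW eqxx /updh; case: eqP => //; lia.
have SfW : Sf ws w w = W by rewrite /Sf; lia.
have oldg : forall x y bb vv, good ws H x y bb vv -> good (wsW ws) (HW ws H v) x y bb vv.
  move=> x y bb vv g; apply: good_mono g hws _ _.
    move=> k hk _; case: (eqVneq y w) => [ey|hy]; last by rewrite wne //; lia.
    case: (eqVneq x w) => [ex|hx]; last by rewrite ey wne2 //; rewrite ey in hk; lia.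
    by subst; rewrite SfW in hk; lia.
  by move=> k hk; apply: Hw; have := Sf_le x y I; lia.
split.
- move=> i; rewrite ww; case: (eqVneq i w) => [->|hi]; first by rewrite ww.
  by rewrite wne //; have := I1 I i; lia.
- move=> i k hk; case: (eqVneq i w) => [->//|hi].
  rewrite wne // in hk; rewrite Hw; last by have := I1 I i; lia.
  by rewrite /HW (negbTE hi) (I2 I hk).
- move=> i j; case: (eqVneq i w) => [->|hi]; last by rewrite !wne //; apply I.
  rewrite ww; case: (eqVneq j w) => [->|hj]; first by rewrite ww.
  by rewrite wne2 //; have := I3 I w j; lia.
- move=> i j; case: (eqVneq i w) => [ei|hi]; last first.
    by rewrite wne //; have := I4 I i j; have := Sf_mono j i hws; lia.
  case: (eqVneq j w) => [ej|hj]; first by subst; rewrite /Sf ww; lia.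
  by subst; rewrite wne2 //; have := I4 I w j; have := Sf_mono j w hws; lia.
- move=> p /In_cat [hp|hp].
    by move: (I5 I hp); case: p hp => [[x y] []] //= b vv _; apply: oldg.
  have [l [-> hl]] := In_map_filter hp; rewrite /=.
  have hlw : l != w by apply/eqP => e; move: hl; rewrite e /upd eqxx; lia.
  move: hl; rewrite /upd (negbTE hlw) => /eqP hl.
  exists W.+1; split; last by rewrite /HW eqxx /updh eqxx.
  rewrite wne // /Sf ww wne2 //; have := I4 I l w; rewrite /Sf; lia.
- move=> i h hh; move: (I6 I hh); case: h hh => //= j b vv _; apply: oldg.
- move=> x y bb; rewrite count_cat count_out -addnAC (I7 I x y bb).
  case: (eqVneq x w) => [ex|hx]; last first.
    rewrite /= addn0 /Sf !(wne x) //.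
    case: (eqVneq y w) => [ey|hy]; last by rewrite wne.
    by subst y; rewrite wne2.
  subst x; case: (eqVneq y w) => [ey|hy].
    subst y; rewrite SfW /Sf ww /upd eqxx /= cntp0.
    have -> : minn W.+1 W.+2 = W.+1 by lia.
    have -> : (W.+1 == W.+1 - 1) = false by apply/eqP; lia.
    by rewrite cntp0.
  rewrite wne // /Sf ww wne2 // /upd (negbTE hy) /=.
  have h4 := I4 I y w; have h3 := I3 I w y; rewrite /Sf -/W in h4.
  case: (eqVneq (ws w y) W) => [e|ne] /=.
    rewrite e in h4 *; have -> : minn W W.+1 = W by lia.
    have -> : minn W.+1 W.+1 = W.+1 by lia.
    rewrite cntp_S //; lia.
  have -> : W.+1 - 1 = W by lia.
  rewrite (negbTE ne) /= addn0.
  have -> : minn W.+1 (ws w y).+1 = (ws w y).+1 by lia.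
  have -> : minn W (ws w y).+1 = (ws w y).+1 by rewrite -/W in h3; have: ws w y != W := ne; lia.
  done.
Qed.


Lemma handler_pre ws H nt pd i j b v p1 p2 :
  Inv ws H nt pd -> pd i = p1 ++ PWrite j b v :: p2 -> b = odd (ws i j).+1 ->
  [/\ j != i, (ws i j).+1 <= Sf ws j i, v = H w (ws i j).+1,
      (forall bb vv, List.In (j, i, MWrite bb vv) nt -> bb != b) &
      (forall bb vv, List.In (PWrite j bb vv) (p1 ++ p2) -> bb != b)].
Proof.
move=> I hpd hb.
have hin : List.In (PWrite j b v) (pd i) by rewrite hpd; apply/In_cat; right; left.
have g := I6 I hin; rewrite /= hb in g.
have [hS hv] := good_k1 I g.
have ji : j != i by apply/eqP => e; subst j; move: hS; rewrite /Sf; lia.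
have c1 : cntp b (ws i j) (Sf ws j i) = 1 by rewrite hb; apply: cntp1; have := Sf_ub j i I; lia.
have := I7 I j i b; rewrite c1 hpd count_cat /= eqxx hb eqxx /= => hc.
split=> //.
  move=> bb vv hi; apply/negP => /eqP e; subst bb.
  have := In_count (a := isw j i (odd (ws i j).+1)) hi; rewrite /= !eqxx /=.
  by move=> /(_ isT); lia.
move=> bb vv hi; apply/negP => /eqP e; subst bb.
have := In_count (a := ispw j (odd (ws i j).+1)) hi; rewrite /= !eqxx /= count_cat.
by move=> /(_ isT); lia.
Qed.


Lemma handlerBC_inv ws H nt pd i j b v p1 p2 :
  Inv ws H nt pd -> pd i = p1 ++ PWrite j b v :: p2 -> b = odd (ws i j).+1 ->
  (ws i j).+1 != (ws i i).+1 ->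
  Inv (fun a => if a == i then upd (ws i) j (ws i j).+1 else ws a) H
      (nt ++ (if (ws i j).+1 < ws i i then [:: (i, j, MWrite (odd (ws i j).+2) (H i (ws i j).+2))] else [::]))
      (fun a => if a == i then p1 ++ p2 else pd a).
Proof.
move=> I hpd hb hne.
have [ji hS hv hnet hpp] := handler_pre I hpd hb.
set R := ws i j in hb hne hS hv hnet hpp *.
have ij : i != j by rewrite eq_sym.
set ws' := fun a => if a == i then upd (ws i) j R.+1 else ws a.
have hR : R < ws i i by have := I3 I i j; rewrite -/R; lia.
have eij : ws' i j = R.+1 by rewrite /ws' /upd !eqxx.
have eo : forall a c, ~~ ((a == i) && (c == j)) -> ws' a c = ws a c.
  move=> a c; rewrite /ws' /upd; case: (eqVneq a i) => [->|] //=.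
  by case: (eqVneq c j) => [->|].
have eaa : forall a, ws' a a = ws a a.
  move=> a; apply: eo; case: (eqVneq a i) => [->|] //=; by rewrite eq_sym ji.
have hws : forall a c, ws a c <= ws' a c.
  move=> a c; case: (boolP ((a == i) && (c == j))) => [/andP [/eqP -> /eqP ->]|h].
    by rewrite eij -/R.
  by rewrite eo.
have Sfo : forall x y, ~~ ((x == i) && (y == j)) -> Sf ws' x y = Sf ws x y.
  by move=> x y h; rewrite /Sf eaa eo.
have oldg : forall x y bb vv, good ws H x y bb vv -> (y == i) && (x == j) ==> (bb != b) ->
    good ws' H x y bb vv.
  move=> x y bb vv g hbb; apply: good_mono g hws _ _ => //.
  move=> k hk pk; case: (boolP ((y == i) && (x == j))) => [hyx|hyx]; last by rewrite eo //; case/andP: hk.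
  move: hyx hbb => /andP [/eqP ey /eqP ex]; subst x y; rewrite !eqxx /= eij => hbb.
  have : k != R.+1 by apply/eqP => e; subst k; rewrite -pk hb eqxx in hbb.
  move: hk; rewrite -/R; lia.
have hin : forall h, List.In h (p1 ++ p2) -> List.In h (pd i).
  by move=> h; rewrite hpd => /In_cat [h1|h1]; apply/In_cat; [left|right; right].
split.
- by move=> a; rewrite !eaa; apply I.
- by move=> a k; rewrite eaa; apply I.
- move=> a c; rewrite eaa; case: (boolP ((a == i) && (c == j))) => [/andP [/eqP -> /eqP ->]|h].
    by rewrite eij; lia.
  by rewrite eo //; apply I.
- move=> a c; case: (boolP ((a == i) && (c == j))) => [/andP [/eqP -> /eqP ->]|h].
    by rewrite eij; have := Sf_mono j i hws; lia.
  by rewrite eo //; have := I4 I a c; have := Sf_mono c a hws; lia.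
- move=> p /In_cat [hp|hp].
    move: (I5 I hp); case: p hp => [[x y] m]; case: m => //= bb vv hp g.
    by apply: oldg g _; apply/implyP => /andP [/eqP ey /eqP ex]; subst; apply: hnet hp.
  move: hp; case: ifP => // hlt [] // <- /=.
  exists R.+2; split; last first.
    split=> //; rewrite (I2 I (k := R.+2)) //.
  rewrite eo; last by rewrite (negbTE ji).
  rewrite /Sf eaa eij; have := I4 I j i; rewrite /Sf -/R; lia.
- move=> a h; case: (eqVneq a i) => [->|ha] hh.
    move: (I6 I (hin _ hh)); case: h hh => //= x bb vv hh g.
    by apply: oldg g _; rewrite eqxx /=; apply/implyP => /eqP ex; subst x; apply: hpp hh.
  by move: (I6 I hh); case: h hh => //= x bb vv hh g; apply: oldg g _; rewrite (negbTE ha).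
- move=> x y bb; rewrite count_cat.
  have hc := I7 I x y bb.
  have cpd : count (ispw x bb) (pd i) = count (ispw x bb) (p1 ++ p2) + ((j == x) && (b == bb)).
    by rewrite hpd !count_cat /=; lia.
  case: (boolP ((y == i) && (x == j))) => [/andP [/eqP ey /eqP ex]|h1].
    subst x y; rewrite eij Sfo; last by rewrite (negbTE ji).
    rewrite eqxx; rewrite eqxx in cpd.
    have -> : count (isw j i bb) (if R.+1 < ws i i then [:: (i, j, MWrite (odd R.+2) (H i R.+2))] else [::]) = 0.
      by case: ifP => //= _; rewrite /isw (negbTE ij).
    rewrite cntp_R // -/R in hc; rewrite hb /= in cpd; lia.
  case: (boolP ((x == i) && (y == j))) => [/andP [/eqP ex /eqP ey]|h2].
    subst x y; rewrite (negbTE ji) eo; last by rewrite (negbTE ji).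
    rewrite /Sf eaa eij -/R; rewrite /Sf -/R in hc.
    have h4 := I4 I j i; rewrite /Sf -/R in h4.
    case: ifP => hlt /=.
      rewrite !eqxx /=.
      have -> : minn (ws i i) R.+2 = R.+2 by lia.
      have e1 : minn (ws i i) R.+1 = R.+1 by lia.
      rewrite e1 in hc h4; rewrite cntp_S //; lia.
    have -> : minn (ws i i) R.+2 = ws i i by lia.
    have e1 : minn (ws i i) R.+1 = ws i i by lia.
    rewrite e1 in hc; lia.
  rewrite eo // Sfo //.
  have -> : count (isw x y bb) (if R.+1 < ws i i then [:: (i, j, MWrite (odd R.+2) (H i R.+2))] else [::]) = 0.
    case: ifP => //= _; rewrite /isw; case: (eqVneq i x) => [ex|] //=; subst x.
    by case: (eqVneq j y) => [ey|] //=; subst y; rewrite !eqxx in h2.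
  case: (eqVneq y i) => [ey|hy]; last by lia.
  subst y; rewrite eqxx /= in h1.
  rewrite eq_sym (negbTE h1) /= in cpd; lia.
Qed.


Lemma handlerA_inv ws H nt pd i j b v p1 p2 :
  Inv ws H nt pd -> pd i = p1 ++ PWrite j b v :: p2 -> b = odd (ws i j).+1 ->
  (ws i j).+1 == (ws i i).+1 ->
  Inv (fun a => if a == i then upd (upd (ws i) i (ws i j).+1) j (ws i j).+1 else ws a)
      (fun a => if a == i then updh (H i) (ws i j).+1 v else H a)
      (nt ++ [seq (i, l, MWrite (odd (ws i j).+1) v) | l <- enum 'I_n &
                upd (ws i) i (ws i j).+1 l == (ws i j).+1 - 1])
      (fun a => if a == i then p1 ++ p2 else pd a).
Proof.
move=> I hpd hb /eqP [hRi].
have [ji hS hv hnet hpp] := handler_pre I hpd hb.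
set R := ws i j in hb hRi hS hv hnet hpp *.
have ij : i != j by rewrite eq_sym.
have iw : i != w.
  by apply/eqP => e; have := Sf_le j i I; rewrite -e -hRi; lia.
set ws' := fun a => if a == i then upd (upd (ws i) i R.+1) j R.+1 else ws a.
set H' := fun a => if a == i then updh (H i) R.+1 v else H a.
have eii : ws' i i = R.+1 by rewrite /ws' /upd eqxx (negbTE ij) eqxx.
have eij : ws' i j = R.+1 by rewrite /ws' /upd !eqxx.
have eo : forall a c, a != i -> ws' a c = ws a c by move=> a c h; rewrite /ws' (negbTE h).
have eic : forall c, c != i -> c != j -> ws' i c = ws i c.
  by move=> c h1 h2; rewrite /ws' /upd eqxx (negbTE h1) (negbTE h2).
have hws : forall a c, ws a c <= ws' a c.
  move=> a c; case: (eqVneq a i) => [->|ha]; last by rewrite eo.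
  case: (eqVneq c i) => [->|hc]; first by rewrite eii; lia.
  case: (eqVneq c j) => [->|hc2]; first by rewrite eij -/R.
  by rewrite eic.
have Hw : forall k, H' w k = H w k by move=> k; rewrite /H' eq_sym (negbTE iw).
have Sfii : Sf ws i i = R by rewrite /Sf; lia.
have oldg : forall x y bb vv, good ws H x y bb vv -> (y == i) && (x == j) ==> (bb != b) ->
    good ws' H' x y bb vv.
  move=> x y bb vv g hbb; apply: good_mono g hws _ _ => //.
  move=> k hk pk; case: (eqVneq y i) => [ey|hy]; last by rewrite eo //; case/andP: hk.
  subst y; case: (eqVneq x i) => [ex|hx]; first by subst x; rewrite Sfii in hk; lia.
  case: (eqVneq x j) => [ex|hx2]; last by rewrite eic //; case/andP: hk.
  subst x; rewrite eij; rewrite !eqxx /= in hbb.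
  have : k != R.+1 by apply/eqP => e; subst k; rewrite -pk hb eqxx in hbb.
  move: hk; rewrite -/R; lia.
have hin : forall h, List.In h (p1 ++ p2) -> List.In h (pd i).
  by move=> h; rewrite hpd => /In_cat [h1|h1]; apply/In_cat; [left|right; right].
have wsw : ws' w w = ws w w by rewrite eo // eq_sym.
split.
- move=> a; rewrite wsw; case: (eqVneq a i) => [->|ha]; last by rewrite eo //; apply I.
  by rewrite eii; have := Sf_le j i I; lia.
- move=> a k; rewrite Hw; case: (eqVneq a i) => [->|ha]; last first.
    by rewrite eo // => hk; rewrite /H' (negbTE ha); apply: (I2 I).
  rewrite eii => hk; rewrite /H' eqxx /updh; case: eqP => [->//|ne].
  by apply: (I2 I); lia.
- move=> a c; case: (eqVneq a i) => [->|ha]; last by rewrite !eo //; apply I.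
  rewrite eii; case: (eqVneq c i) => [->|hc]; first by rewrite eii.
  case: (eqVneq c j) => [->|hc2]; first by rewrite eij.
  by rewrite eic //; have := I3 I i c; lia.
- move=> a c; case: (eqVneq a i) => [ea|ha]; last first.
    by rewrite eo //; have := I4 I a c; have := Sf_mono c a hws; lia.
  subst a; case: (eqVneq c i) => [->|hc]; first by rewrite /Sf eii; lia.
  have := Sf_mono c i hws; case: (eqVneq c j) => [->|hc2]; first by rewrite eij; lia.
  by rewrite eic //; have := I4 I i c; lia.
- move=> p /In_cat [hp|hp].
    move: (I5 I hp); case: p hp => [[x y] m]; case: m => //= bb vv hp g.
    by apply: oldg g _; apply/implyP => /andP [/eqP ey /eqP ex]; subst; apply: hnet hp.
  have [l [-> hl]] := In_map_filter hp; rewrite /=.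
  have hli : l != i by apply/eqP => e; move: hl; rewrite e /upd eqxx; lia.
  move: hl; rewrite /upd (negbTE hli) => /eqP hl.
  have hl' : ws i l = R by lia.
  exists R.+1; split; last by rewrite Hw hv.
  rewrite eo // /Sf eii; have := hws i l; have := I4 I l i; rewrite /Sf -hRi; lia.
- move=> a h; case: (eqVneq a i) => [->|ha] hh.
    move: (I6 I (hin _ hh)); case: h hh => //= x bb vv hh g.
    by apply: oldg g _; rewrite eqxx /=; apply/implyP => /eqP ex; subst x; apply: hpp hh.
  by move: (I6 I hh); case: h hh => //= x bb vv hh g; apply: oldg g _; rewrite (negbTE ha).
- move=> x y bb; rewrite count_cat count_out.
  have hc := I7 I x y bb.
  have cpd : count (ispw x bb) (pd i) = count (ispw x bb) (p1 ++ p2) + ((j == x) && (b == bb)).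
    by rewrite hpd !count_cat /=; lia.
  case: (eqVneq y i) => [ey|hy].
    subst y; rewrite cpd in hc.
    case: (eqVneq x i) => [ex|hx].
      subst x; rewrite Sfii -hRi cntp0 in hc; rewrite /Sf eii.
      have -> : minn R.+1 R.+2 = R.+1 by lia.
      rewrite cntp0 /upd !eqxx; have -> : (R.+1 == R.+1 - 1) = false by apply/eqP; lia.
      lia.
    have eS : Sf ws' x i = Sf ws x i by rewrite /Sf !eo.
    rewrite eS /=.
    case: (eqVneq x j) => [ex|hx2].
      subst x; rewrite eij; rewrite -/R cntp_R // hb /= eqxx /= in hc; lia.
    have hjx : (j == x) = false by rewrite eq_sym; apply/negbTE.
    rewrite eic //; rewrite hjx /= in hc; lia.
  case: (eqVneq x i) => [ex|hx]; last first.
    by rewrite /= addn0 eo // /Sf !eo.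
  subst x; rewrite eo // /Sf eii /upd (negbTE hy) /=.
  rewrite /Sf -hRi in hc.
  have h4 := I4 I y i; rewrite /Sf -hRi in h4.
  have -> : R.+1 - 1 = R by lia.
  case: (eqVneq (ws i y) R) => [e|ne] /=.
    have e2 := hws i y; rewrite e in e2 hc h4.
    have -> : minn R.+1 (ws' i y).+1 = R.+1 by lia.
    rewrite (_ : minn R R.+1 = R) in hc; last by lia.
    rewrite cntp_S; [lia | lia].
  have hyj : y != j by apply/eqP => e; subst y; rewrite -/R eqxx in ne.
  rewrite eic // addn0.
  have h3 := I3 I i y.
  have -> : minn R.+1 (ws i y).+1 = (ws i y).+1 by lia.
  have e3 : minn R (ws i y).+1 = (ws i y).+1 by rewrite -hRi in h3 *; have := ne; move/eqP; lia.
  by rewrite e3 in hc.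
Qed.


Definition InvC (c : config n V) :=
  Inv (fun a => wsync (loc c a)) (fun a => hist (loc c a)) (net c) (fun a => pend (loc c a)).

Lemma upd_fun (T : Type) (f : lstate n V -> T) (g : 'I_n -> lstate n V) i s' :
  (fun a => f (upd g i s' a)) = (fun a => if a == i then f s' else f (g a)).
Proof. by apply: functional_extensionality => a; rewrite /upd; case: (a == i). Qed.

Lemma InvC_upd c i s' nt :
  Inv (fun a => if a == i then wsync s' else wsync (loc c a))
      (fun a => if a == i then hist s' else hist (loc c a)) nt
      (fun a => if a == i then pend s' else pend (loc c a)) ->
  InvC (Config (upd (loc c) i s') nt).
Proof.
by rewrite /InvC /= (upd_fun (@wsync n V)) (upd_fun (@hist n V)) (upd_fun (@pend n V)).
Qed.

Lemma same_fun (T : Type) (f : lstate n V -> T) (c : config n V) i (x : T) :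
  x = f (loc c i) -> (fun a => if a == i then x else f (loc c a)) = (fun a => f (loc c a)).
Proof. by move=> ->; apply: functional_extensionality => a; case: eqP => [->|]. Qed.

Lemma InvC_frame c i s' nt' : InvC c -> wsync s' = wsync (loc c i) -> hist s' = hist (loc c i) ->
  (forall p, List.In p nt' -> GP (fun a => wsync (loc c a)) (fun a => hist (loc c a)) p) ->
  (forall h, List.In h (pend s') -> GH (fun a => wsync (loc c a)) (fun a => hist (loc c a)) i h) ->
  (forall j y b, count (isw j y b) nt' + count (ispw j b) (if y == i then pend s' else pend (loc c y)) =
                 count (isw j y b) (net c) + count (ispw j b) (pend (loc c y))) ->
  InvC (Config (upd (loc c) i s') nt').
Proof.
move=> I e1 e2 h5 h6 h7; apply: InvC_upd.
rewrite (same_fun e1) (same_fun e2).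
apply: (Inv_frame I h5) => //.
move=> a h /=; case: (eqVneq a i) => [->|_]; [exact: h6|by move=> hh; have := I6 I hh].
Qed.

Lemma pend_same (c : config n V) (i : 'I_n) : (fun a => if a == i then pend (loc c i) else pend (loc c a)) = (fun a => pend (loc c a)).
Proof. exact: same_fun. Qed.

Lemma nomw_count (T : Type) (f : T -> pkt) (s : seq T) :
  (forall t, match f t with (_, _, MWrite _ _) => False | _ => True end) ->
  forall j y b, count (isw j y b) (map f s) = 0.
Proof.
move=> h j y b; apply: count_isw_map => t; have := h t.
by case: (f t) => [[? ?] []].
Qed.

Lemma I5C (c : config n V) : InvC c -> forall p, List.In p (net c) ->
  GP (fun a => wsync (loc c a)) (fun a => hist (loc c a)) p.
Proof. by move=> I p hp; have := I5 I hp. Qed.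

Lemma I6C (c : config n V) : InvC c -> forall i h, List.In h (pend (loc c i)) ->
  GH (fun a => wsync (loc c a)) (fun a => hist (loc c a)) i h.
Proof. by move=> I i h hh; have := I6 I hh. Qed.

Lemma step_inv t c c' : InvC c -> step w t c c' -> InvC c'.
Proof.
move=> I hs; case: hs I => {c c'}.
- move=> c0 i s' out ncr ls I.
  remember (loc c0 i) as s0 eqn:Es.
  destruct ls as [s v hi hid|s wsn h1 h2|s h1|s rsn h1 h2|s sn h1 h2|s p1 h p2 hp gd]; subst.
  + apply: InvC_upd; rewrite /inv_write /= pend_same.
    exact: (write_inv v I).
  + apply: InvC_frame => //.
    * by move=> p /In_cat [hp|[]]; apply: (I5C I).
    * by move=> h hh; apply: (I6C I).
    * by move=> j y b; rewrite count_cat /= addn0; case: eqP => [->|].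
  + apply: InvC_frame => //.
    * move=> p /In_cat [hp|hp]; first by apply: (I5C I).
      by have [l [-> _]] := In_map_filter hp.
    * by move=> h hh; apply: (I6C I).
    * move=> j y b; rewrite count_cat (@nomw_count _ (fun l => (i, l, @MRead V))) //.
      by rewrite addn0; case: eqP => [->|].
  + apply: InvC_frame => //.
    * by move=> p /In_cat [hp|[]]; apply: (I5C I).
    * by move=> h hh; apply: (I6C I).
    * by move=> j y b; rewrite count_cat /= addn0; case: eqP => [->|].
  + apply: InvC_frame => //.
    * by move=> p /In_cat [hp|[]]; apply: (I5C I).
    * by move=> h hh; apply: (I6C I).
    * by move=> j y b; rewrite count_cat /= addn0; case: eqP => [->|].
  + case: h hp gd => [j b v|j sn] hp gd.
      rewrite /run /=; move/eqP: gd => hb.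
      case: ifP => hA.
        apply: InvC_upd; exact: (handlerA_inv I hp hb hA).
      have hnA : (wsync (loc c0 i) j).+1 != (wsync (loc c0 i) i).+1 by rewrite hA.
      have := handlerBC_inv I hp hb hnA.
      case: ifP => hB.
        move=> J; apply: InvC_upd; rewrite (same_fun (f := @hist n V) (erefl _)); exact: J.
      move=> J; apply: InvC_upd; rewrite (same_fun (f := @hist n V) (erefl _)); exact: J.
    rewrite /run /=; apply: InvC_frame => //.
    * by move=> p /In_cat [hp2|[<-|[]]] //; exact: (I5C I hp2).
    * by move=> h hh; apply: (I6C I); rewrite hp; move/In_cat: hh => [?|?]; apply/In_cat; [left|right; right].
    * move=> x y b; rewrite count_cat /= addn0.
      case: (eqVneq y i) => [->|_]; [rewrite hp !count_cat /=; lia|lia].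
- move=> c0 s1 s2 j i m hn ncr I; case: m hn => [b v||] hn; apply: InvC_frame => //.
  + by move=> p hp; apply: (I5C I); rewrite hn; move/In_cat: hp => [?|?]; apply/In_cat; [left|right; right].
  + move=> h /=; rewrite -cats1 => /In_cat [hh|[<-|[]]]; first by apply: (I6C I).
    by have := I5 I (p := (j, i, MWrite b v)); apply; rewrite hn; apply/In_cat; right; left.
  + move=> x y bb; rewrite hn !count_cat /=.
    case: (eqVneq y i) => [->|hy] /=; first by rewrite -cats1 count_cat /=; lia.
    by rewrite andbF /=.
  + by move=> p hp; apply: (I5C I); rewrite hn; move/In_cat: hp => [?|?]; apply/In_cat; [left|right; right].
  + move=> h /=; rewrite -cats1 => /In_cat [hh|[<-|[]]] //; by apply: (I6C I).
  + move=> x y bb; rewrite hn !count_cat /=.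
    case: (eqVneq y i) => [->|hy] /=; first by rewrite -cats1 count_cat /=; lia.
    lia.
  + by move=> p hp; apply: (I5C I); rewrite hn; move/In_cat: hp => [?|?]; apply/In_cat; [left|right; right].
  + by move=> h /= hh; apply: (I6C I).
  + move=> x y bb; rewrite hn !count_cat /=.
    by case: (eqVneq y i) => [->|hy]; lia.
- move=> c0 i ncr _ I; apply: InvC_frame => //.
  + by move=> p hp; apply: (I5C I).
  + by move=> h hh; apply: (I6C I).
  + by move=> x y bb; case: (eqVneq y i) => [->|hy].
Qed.

End Proof.

Lemma init_inv (n : nat) (V : Type) (w : 'I_n) (v0 : V) (c : config n V) :
  initial v0 c -> InvC w c.
Proof.
case=> hn hl.
have z : forall a b, wsync (loc c a) b = 0 by move=> a b; case: (hl a) => _ [-> _].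
have hp : forall a, pend (loc c a) = [::] by move=> a; case: (hl a) => _ [_ [_ [-> _]]].
have h0 : forall a, hist (loc c a) 0 = v0 by move=> a; case: (hl a).
split.
- by move=> i; rewrite !z.
- move=> i k; rewrite z; case: k => // _; by rewrite !h0.
- by move=> i j; rewrite !z.
- by move=> i j; rewrite /Sf !z.
- by rewrite hn.
- by move=> i h; rewrite hp.
- by move=> j i b; rewrite hn hp /Sf !z.
Qed.

Theorem lemma4 (n : nat) (V : Type) (v0 : V) (w : 'I_n) (t : nat)
  (ht : 2 * t < n) (c : config n V) (hc : reachable v0 w t c) (i : 'I_n) :
  is_prefix (hist_seq i (loc c i)) (hist_seq w (loc c w)).
Proof.
have I : InvC w c.
  elim: hc => [c0 hi|c0 c1 _ IH hs]; first exact: init_inv hi.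
  exact: step_inv IH hs.
have h1 := I1 I i.
rewrite /hist_seq /mkseq.
set a := wsync (loc c i) i in h1 *; set W := wsync (loc c w) w in h1 *.
exists [seq hist (loc c w) k | k <- iota a.+1 (W - a)].
have -> : W.+1 = a.+1 + (W - a) by lia.
rewrite iotaD map_cat add0n; congr (_ ++ _).
apply/eq_in_map => k; rewrite mem_iota add0n => /andP [_ hk].
by symmetry; apply: (I2 I); rewrite -/a; lia.
Qed.
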